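(* Let $X$ be a Banach space, $F:X\rightrightarrows Y$ a set-valued map with nonempty values, $\bar x\in X$ and $T\in\partial F(\bar x)$. Then $y^*\circ T\in\partial(y^*\circ F)(\bar x)$ for all $y^*\in K^+\setminus\{0\}$.
   Context: $Y$ is a real normed space with dual $Y^*$; $B(X,Y)$ is the space of bounded linear operators $X\to Y$; $B(x,\delta)$ is the open ball and $D_Y$ the closed unit ball. $K\subset Y$ is a pointed closed convex cone and $K^+=\{y^*\in Y^*: y^*(k)\ge0\ \forall k\in K\}$. $\operatorname{Epi}F(x)=F(x)+K$; for nonempty $A,B$, $e(A,B)=\sup_{a\in A}\inf_{b\in B}\|a-b\|$. The Fréchet subdifferential $\widehat\partial F(\bar x)$ is the set of all $T\in B(X,Y)$ such that for every $\varepsilon>0$ there is $\delta>0$ with $F(x)+K\subset F(\bar x)+K+T(x-\bar x)+\varepsilon\|x-\bar x\|D_Y$ for all $x\in B(\bar x,\delta)$. The limiting subdifferential $\partial F(\bar x)$ is the set of all $T\in B(X,Y)$ for which there exist a sequence $x_n\to\bar x$ with $e(\operatorname{Epi}F(x_n),\operatorname{Epi}F(\bar x))\to0$ and operators $T_n\in\widehat\partial F(x_n)$ with $T_n(x)\to T(x)$ for every $x\in X$. Both definitions are also applied to maps $G:X\rightrightarrows\mathbb R$ with $Y=\mathbb R$, $K=[0,\infty)$. For $y^*\in Y^*$, $y^*\circ F$ is $x\mapsto\{y^*(y):y\in F(x)\}$. *)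

(* Defs.v *)
From HB Require Import structures.
From mathcomp Require Import all_boot all_order all_algebra.
From mathcomp Require Import all_classical all_reals all_analysis.
Set Implicit Arguments. Unset Strict Implicit. Unset Printing Implicit Defensive.
Import Order.TTheory GRing.Theory Num.Theory.
Import numFieldNormedType.Exports.
Local Open Scope classical_set_scope.
Local Open Scope ring_scope.

Section Defs.
Context {R : realType}.

Definition bounded_linear {X Y : normedModType R} (T : X -> Y) : Prop :=
  (forall (a : R) (u v : X), T (a *: u + v) = a *: T u + T v) /\ continuous T.

Definition pointed_closed_convex_cone {Y : normedModType R} (K : set Y) : Prop :=
  [/\ K 0, closed K,
      (forall k1 k2, K k1 -> K k2 -> K (k1 + k2)),
      (forall (a : R) k, 0 <= a -> K k -> K (a *: k)) &
      (forall k, K k -> K (- k) -> k = 0)].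

Definition dual_cone {Y : normedModType R} (K : set Y) : set (Y -> R) :=
  [set ys | bounded_linear ys /\ forall k, K k -> (0 : R) <= ys k].

Definition Epi {X Y : normedModType R} (K : set Y) (F : X -> set Y) (x : X) : set Y :=
  [set y + k | y in F x & k in K].

Definition unit_ball {Y : normedModType R} : set Y := [set d | `|d| <= 1].

Definition excess {Y : normedModType R} (A B : set Y) : \bar R :=
  ereal_sup [set ereal_inf [set (`|a - b|)%:E | b in B] | a in A].

Definition frechet_subdiff {X Y : normedModType R} (K : set Y) (F : X -> set Y)
    (xb : X) : set (X -> Y) :=
  [set T | bounded_linear T /\
     forall eps : R, 0 < eps -> exists2 delta : R, 0 < delta &
       forall x : X, `|x - xb| < delta ->
         Epi K F x `<=`
         [set z + T (x - xb) + (eps * `|x - xb|) *: d | z in Epi K F xb & d in unit_ball]].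

Definition limiting_subdiff {X Y : normedModType R} (K : set Y) (F : X -> set Y)
    (xb : X) : set (X -> Y) :=
  [set T | bounded_linear T /\
     exists (xs : nat -> X) (Ts : nat -> X -> Y),
       [/\ xs @ \oo --> xb,
           (fun n => excess (Epi K F (xs n)) (Epi K F xb)) @ \oo --> 0%E,
           (forall n, frechet_subdiff K F (xs n) (Ts n)) &
           (forall x, (fun n => Ts n x) @ \oo --> T x)]].

Definition nonneg_cone : set R := [set r | 0 <= r].

Definition scal_comp {X Y : normedModType R} (ys : Y -> R) (F : X -> set Y) : X -> set R :=
  fun x => ys @` F x.

End Defs.

(* Main.v *)
Set Warnings "-notation-overridden,-ambiguous-paths,-notation-incompatible-prefix".
Require Import Defs.
From HB Require Import structures.
From mathcomp Require Import all_boot all_order all_algebra.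
From mathcomp Require Import all_classical all_reals all_analysis.
From mathcomp Require Import ring.
Import Order.TTheory GRing.Theory Num.Theory.
Import numFieldNormedType.Exports.
Local Open Scope classical_set_scope.
Local Open Scope ring_scope.

Section H.
Context {R : realType}.

Lemma bl0 {V W : normedModType R} (f : V -> W) : bounded_linear f -> f 0 = 0.
Proof.
move=> [L _]; have := L 1 0 0; rewrite !scale1r addr0 => h.
by apply: (addrI (f 0)); rewrite addr0 -h.
Qed.

Lemma blZ {V W : normedModType R} (f : V -> W) a u : bounded_linear f -> f (a *: u) = a *: f u.
Proof. move=> B; have := (B.1 a u 0); rewrite addr0 bl0 // addr0; done. Qed.

Lemma blD {V W : normedModType R} (f : V -> W) u v : bounded_linear f -> f (u + v) = f u + f v.
Proof. by move=> B; have := (B.1 1 u v); rewrite !scale1r. Qed.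

Lemma blB {V W : normedModType R} (f : V -> W) u v : bounded_linear f -> f (u - v) = f u - f v.
Proof. by move=> B; rewrite blD // -scaleN1r blZ // scaleN1r. Qed.

Lemma bl_bound {V : normedModType R} (f : V -> R) : bounded_linear f ->
  exists2 M : R, 0 < M & forall y, `|f y| <= M * `|y|.
Proof.
move=> B; have := B.2 0; move/cvgrPdist_lt => /(_ 1 ltr01).
move=> /nbhs_ballP [e /= e0 He]. rewrite bl0 // in He.
exists (2 / e); first by rewrite divr_gt0.
move=> y; have [->|y0] := eqVneq y 0; first by rewrite bl0 // !normr0 mulr0.
have ny0 : 0 < `|y| by rewrite normr_gt0.
set c := (e / 2) / `|y|.
have c0 : 0 < c by rewrite /c !divr_gt0.
have : ball 0 e (c *: y).
  rewrite -ball_normE /ball_ /= sub0r normrN normrZ gtr0_norm // /c divfK ?gt_eqF //.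
  by rewrite ltr_pdivrMr // ltr_pMr // ltr1n.
move/He; rewrite sub0r normrN blZ // normrZ gtr0_norm // => h.
have : `|f y| < c^-1 by rewrite -(ltr_pM2l c0) mulfV ?gt_eqF.
move/ltW/le_trans; apply.
by rewrite /c invf_div invf_div mulrC.
Qed.

Lemma bl_comp {U V W : normedModType R} (f : U -> V) (g : V -> W) :
  bounded_linear f -> bounded_linear g -> bounded_linear (g \o f).
Proof.
move=> Bf Bg; split; first by move=> a u v /=; rewrite Bf.1 Bg.1.
by move=> x; apply: continuous_comp; [exact: Bf.2 | exact: Bg.2].
Qed.

Lemma frechet_comp {X Y : normedModType R} (K : set Y) (F : X -> set Y)
   (x0 : X) (Tn : X -> Y) (ys : Y -> R) (M : R) :
  0 < M -> (forall y, `|ys y| <= M * `|y|) -> bounded_linear ys ->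
  (forall k, K k -> 0 <= ys k) -> K 0 ->
  frechet_subdiff K F x0 Tn ->
  frechet_subdiff (@nonneg_cone R) (scal_comp ys F) x0 (ys \o Tn).
Proof.
move=> M0 HM ysB ysK K0 [TB HT]; split; first exact: bl_comp.
move=> eps eps0; have [delta d0 Hd] := HT (eps / M) (divr_gt0 eps0 M0).
exists delta => // x hx w [a [y Fy <-] [r r0 <-]].
have : Epi K F x (y + 0) by exists y => //; exists 0.
move=> /(Hd x hx) [z [y0 Fy0 [k0 Kk0 <-]] [d dB heq]].
exists (ys y0 + (ys k0 + r)).
  exists (ys y0); first by exists y0.
  by exists (ys k0 + r) => //; rewrite /nonneg_cone /= addr_ge0 // ysK.
exists (ys d / M).
  rewrite /unit_ball /= normrM normfV (gtr0_norm M0) ler_pdivrMr // mul1r.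
  by apply: (le_trans (HM d)); rewrite ler_piMr // ltW.
rewrite addr0 in heq; rewrite /= -heq !(blD _ _ _ ysB) (blZ _ _ _ ysB).
rewrite /GRing.scale /=.
ring.
Qed.


Lemma excess_comp {X Y : normedModType R} (K : set Y) (F : X -> set Y)
   (x x0 : X) (ys : Y -> R) (M : R) :
  0 < M -> (forall y, `|ys y| <= M * `|y|) -> bounded_linear ys ->
  (forall k, K k -> 0 <= ys k) -> K 0 -> F x !=set0 -> F x0 !=set0 ->
  (0 <= excess (Epi (@nonneg_cone R) (scal_comp ys F) x)
               (Epi (@nonneg_cone R) (scal_comp ys F) x0))%E /\
  (excess (Epi (@nonneg_cone R) (scal_comp ys F) x)
               (Epi (@nonneg_cone R) (scal_comp ys F) x0)
   <= M%:E * excess (Epi K F x) (Epi K F x0))%E.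
Proof.
move=> M0 HM ysB ysK K0 [y1 Fy1] [y2 Fy2].
have inf0 : forall (A : set R) a,
    (0 <= ereal_inf [set (`|a - b|)%:E | b in A])%E.
  by move=> A a; apply: le_ereal_inf_tmp => _ [b _ <-]; rewrite lee_fin.
split.
  apply: le_trans (inf0 _ (ys y1 + 0)) _; apply: ereal_sup_ubound.
  exists (ys y1 + 0) => //; exists (ys y1); first by exists y1.
  by exists 0 => //; rewrite /nonneg_cone /=.
apply: ge_ereal_sup => _ [a [_ [y Fy <-] [r r0 <-]] <-].
set S := [set _ | _ in _].
have bnd : forall b, Epi K F x0 b -> (ereal_inf S <= (M * `|(y + 0) - b|)%:E)%E.
  move=> _ [y0 Fy0 [k0 Kk0 <-]].
  apply: ge_ereal_inf; exists (`|ys y + r - (ys y0 + (ys k0 + r))|)%:E.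
    exists (ys y0 + (ys k0 + r)) => //; exists (ys y0); first by exists y0.
    by exists (ys k0 + r) => //; rewrite /nonneg_cone /= addr_ge0 // ysK.
  rewrite lee_fin; apply: le_trans (HM _); rewrite addr0 !(blB _ _ _ ysB) (blD _ _ _ ysB).
  by rewrite le_eqVlt; apply/orP; left; apply/eqP; congr (`| _ |); ring.
have Ef : ereal_inf S \is a fin_num.
  rewrite ge0_fin_numE ?inf0 //.
  apply: le_lt_trans (bnd (y2 + 0) _) _; last exact: ltry.
  by exists y2 => //; exists 0.
set v := fine (ereal_inf S).
have vE : ereal_inf S = v%:E by rewrite fineK.
have H1 : ((v / M)%:E <= ereal_inf [set (`|(y + 0) - b|)%:E | b in Epi K F x0])%E.
  apply: le_ereal_inf_tmp => _ [b Eb <-]; rewrite lee_fin ler_pdivrMr //.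
  by rewrite mulrC -lee_fin -vE bnd.
have H2 : (ereal_inf [set (`|(y + 0) - b|)%:E | b in Epi K F x0]
           <= excess (Epi K F x) (Epi K F x0))%E.
  apply: ereal_sup_ubound; exists (y + 0) => //; exists y => //; exists 0 => //.
rewrite vE; apply: (le_trans _ (lee_wpmul2l _ (le_trans H1 H2))); last by rewrite lee_fin ltW.
by rewrite -EFinM mulrC divfK ?gt_eqF.
Qed.
End H.

Theorem mainTheorem8 (R : realType) (X : completeNormedModType R)
    (Y : normedModType R) (K : set Y) (F : X -> set Y) (xb : X) (T : X -> Y) :
  pointed_closed_convex_cone K ->
  (forall x, F x !=set0) ->
  limiting_subdiff K F xb T ->
  forall ys : Y -> R, dual_cone K ys -> ys <> (fun _ => 0) ->
    limiting_subdiff (@nonneg_cone R) (scal_comp ys F) xb (ys \o T).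
Proof.
move=> [K0 _ _ _ _] Fne [TB [xs [Ts [xsc exc Tsf Tsc]]]] ys [ysB ysK] _.
have [M M0 HM] := @bl_bound R _ ys ysB.
split; first exact: bl_comp.
exists xs, (fun n => ys \o Ts n); split => //.
- apply: (@squeeze_cvge _ _ _ _ (fun _ => 0%E) _
     (fun n => M%:E * excess (Epi K F (xs n)) (Epi K F xb))%E).
  + by apply: nearW => n; apply/andP; apply: excess_comp.
  + exact: cvg_cst.
  + by rewrite -(mule0 M%:E); apply: cvgeZl => //.
- by move=> n; exact: (@frechet_comp R _ _ K F (xs n) (Ts n) ys M M0 HM ysB ysK K0 (Tsf n)).
- by move=> x; apply: continuous_cvg; [exact: ysB.2 | exact: Tsc].
Qed.
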